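(* Every simple $\mathcal K_{m,n}$-module is strictly simple, i.e. it has no $\mathcal K_{m,n}$-invariant subspaces (graded or not) other than $0$ and itself.
   Context: Fix $(m,n)\in\mathbb Z_+^2\setminus\{(0,0)\}$. $\mathcal K_{m,n}$ is the Weyl superalgebra: the associative superalgebra generated by even elements $t_1,\dots,t_m,\partial_{t_1},\dots,\partial_{t_m}$ and odd elements $\xi_1,\dots,\xi_n,\partial_{\xi_1},\dots,\partial_{\xi_n}$, acting as multiplication and (super)derivation operators on $\mathbb C[t_1,\dots,t_m]\otimes\Lambda(\xi_1,\dots,\xi_n)$ (equivalently, the subalgebra of $\bar U$ generated by $A$ and $\Delta$). Modules are $\mathbb Z_2$-graded, and ''simple'' means having no nontrivial $\mathbb Z_2$-graded submodules. *)

(* Defs.v *)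
From HB Require Import structures.
From mathcomp Require Import all_boot all_algebra.
From mathcomp Require Import complex.
From mathcomp Require Import reals Rstruct.
Set Implicit Arguments. Unset Strict Implicit. Unset Printing Implicit Defensive.
Import GRing.Theory.
Local Open Scope ring_scope.

Definition CC : fieldType := complex Rdefinitions.R.

Section KModules.
Variables (m n : nat) (V : lmodType CC).

Definition is_subspace (W : V -> Prop) : Prop :=
  W 0 /\ (forall (a : CC) (u v : V), W u -> W v -> W (a *: u + v)).

(* A Z_2-graded K_{m,n}-module structure on the vector space V:
   V = V0 (+) V1, even generators t_i, d/dt_i, odd generators xi_j, d/dxi_j,
   acting by linear operators of the right parity and satisfying the
   defining (super-commutator) relations of the Weyl superalgebra K_{m,n}. *)
Record Kmodule := {
  V0 : V -> Prop;
  V1 : V -> Prop;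
  V0_sub : is_subspace V0;
  V1_sub : is_subspace V1;
  V_sum : forall v, exists v0 v1, V0 v0 /\ V1 v1 /\ v = v0 + v1;
  V_direct : forall v, V0 v -> V1 v -> v = 0;
  opt : 'I_m -> V -> V;
  opdt : 'I_m -> V -> V;
  opx : 'I_n -> V -> V;
  opdx : 'I_n -> V -> V;
  opt_lin : forall i, linear (opt i);
  opdt_lin : forall i, linear (opdt i);
  opx_lin : forall j, linear (opx j);
  opdx_lin : forall j, linear (opdx j);
  opt_even : forall i v, (V0 v -> V0 (opt i v)) /\ (V1 v -> V1 (opt i v));
  opdt_even : forall i v, (V0 v -> V0 (opdt i v)) /\ (V1 v -> V1 (opdt i v));
  opx_odd : forall j v, (V0 v -> V1 (opx j v)) /\ (V1 v -> V0 (opx j v));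
  opdx_odd : forall j v, (V0 v -> V1 (opdx j v)) /\ (V1 v -> V0 (opdx j v));
  rel_tt : forall i k v, opt i (opt k v) = opt k (opt i v);
  rel_dtdt : forall i k v, opdt i (opdt k v) = opdt k (opdt i v);
  rel_dtt : forall i k v,
    opdt i (opt k v) - opt k (opdt i v) = (i == k)%:R *: v;
  rel_xx : forall j l v, opx j (opx l v) + opx l (opx j v) = 0;
  rel_dxdx : forall j l v, opdx j (opdx l v) + opdx l (opdx j v) = 0;
  rel_dxx : forall j l v,
    opdx j (opx l v) + opx l (opdx j v) = (j == l)%:R *: v;
  rel_tx : forall i j v, opt i (opx j v) = opx j (opt i v);
  rel_tdx : forall i j v, opt i (opdx j v) = opdx j (opt i v);
  rel_dtx : forall i j v, opdt i (opx j v) = opx j (opdt i v);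
  rel_dtdx : forall i j v, opdt i (opdx j v) = opdx j (opdt i v)
}.

Variable M : Kmodule.

Definition is_submodule (W : V -> Prop) : Prop :=
  is_subspace W /\
  (forall i v, W v -> W (opt M i v)) /\
  (forall i v, W v -> W (opdt M i v)) /\
  (forall j v, W v -> W (opx M j v)) /\
  (forall j v, W v -> W (opdx M j v)).

(* W is Z_2-graded: W = (W /\ V0) (+) (W /\ V1). *)
Definition is_graded (W : V -> Prop) : Prop :=
  forall v0 v1, V0 M v0 -> V1 M v1 -> W (v0 + v1) -> W v0 /\ W v1.

Definition is_zero_sub (W : V -> Prop) : Prop := forall v, W v -> v = 0.
Definition is_full_sub (W : V -> Prop) : Prop := forall v, W v.

Definition simple_Kmodule : Prop :=
  (exists v : V, v != 0) /\
  forall W, is_submodule W -> is_graded W -> is_zero_sub W \/ is_full_sub W.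

Definition strictly_simple_Kmodule : Prop :=
  forall W, is_submodule W -> is_zero_sub W \/ is_full_sub W.

End KModules.

(* Main.v *)
Require Import Defs.
From mathcomp Require Import all_boot all_algebra complex.
From mathcomp Require Import reals Rstruct.
Import GRing.Theory Num.Theory.
Local Open Scope ring_scope.

Lemma two_neq0 : (2:CC) != 0.
Proof. have := @pnatr_eq0 (complex Rdefinitions.R) 2. simpl. by move=> ->. Qed.

Section Lin.
Variable (V : lmodType CC).
Implicit Types (f : V -> V) (u v : V).

Lemma linA f c u v : linear f -> f (c *: u + v) = c *: f u + f v.
Proof. by move=> H; apply: H. Qed.
Lemma lin0 f : linear f -> f 0 = 0.
Proof.
move=> H; have := @linA f 1 0 0 H; rewrite !scale1r !addr0 => /(congr1 (fun x => x - f 0)).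
by rewrite subrr addrK => <-.
Qed.
Lemma linD f u v : linear f -> f (u + v) = f u + f v.
Proof. by move=> H; rewrite -[u]scale1r linA // !scale1r. Qed.
Lemma linZ f c u : linear f -> f (c *: u) = c *: f u.
Proof. by move=> H; rewrite -[c *: u]addr0 linA // lin0 // addr0. Qed.
Lemma linN f u : linear f -> f (- u) = - f u.
Proof. by move=> H; rewrite -scaleN1r linZ // scaleN1r. Qed.
Lemma linB f u v : linear f -> f (u - v) = f u - f v.
Proof. by move=> H; rewrite linD // linN. Qed.

Lemma subD (W : V -> Prop) u v : is_subspace W -> W u -> W v -> W (u + v).
Proof. by case=> _ H Hu Hv; rewrite -[u]scale1r; apply: H. Qed.
Lemma subZ (W : V -> Prop) c u : is_subspace W -> W u -> W (c *: u).
Proof. by case=> H0 H Hu; rewrite -[c *: u]addr0; apply: H. Qed.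
Lemma subN (W : V -> Prop) u : is_subspace W -> W u -> W (- u).
Proof. by move=> H Hu; rewrite -scaleN1r; apply: subZ. Qed.
Lemma subB (W : V -> Prop) u v : is_subspace W -> W u -> W v -> W (u - v).
Proof. by move=> H Hu Hv; apply: subD => //; apply: subN. Qed.

Lemma half_sum u v : (2:CC)^-1 *: ((u + v) + (u - v)) = u.
Proof.
rewrite addrACA subrr addr0 -mulr2n -[u *+ 2]scaler_nat scalerA mulVf ?scale1r //; exact: two_neq0.
Qed.
Lemma half_dif u v : (2:CC)^-1 *: ((u + v) - (u - v)) = v.
Proof.
rewrite opprB addrC addrA addrNK -mulr2n -[v *+ 2]scaler_nat scalerA mulVf ?scale1r //.
exact: two_neq0.
Qed.
End Lin.
Arguments linA {V f c u v}.
Arguments linD {V f u v}.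
Arguments linB {V f u v}.
Arguments lin0 {V f}.
Arguments linZ {V f c u}.
Arguments linN {V f u}.
Arguments subD {V W u v}.
Arguments subZ {V W} c {u}.
Arguments subN {V W u}.
Arguments subB {V W u v}.

Section Main.
Variables (m n : nat) (V : lmodType CC) (M : Kmodule m n V).
Implicit Types (u v w : V).

Local Notation a := (opx M).
Local Notation b := (opdx M).
Local Notation V0 := (V0 M).
Local Notation V1 := (V1 M).

Lemma la j : linear (a j). Proof. exact: opx_lin. Qed.
Lemma lb j : linear (b j). Proof. exact: opdx_lin. Qed.
Hint Resolve la lb : core.

Lemma uniq_dec x0 x1 y0 y1 : V0 x0 -> V1 x1 -> V0 y0 -> V1 y1 ->
  x0 + x1 = y0 + y1 -> x0 = y0 /\ x1 = y1.
Proof.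
move=> h0 h1 g0 g1 e.
have E : x0 - y0 = y1 - x1.
  by rewrite -(addrK x1 x0) e addrAC [y0 + _]addrC addrK.
have z : x0 - y0 = 0.
  apply: (@V_direct _ _ _ M); first exact: subB (V0_sub M) h0 g0.
  by rewrite E; exact: subB (V1_sub M) g1 h1.
move/eqP: z; rewrite subr_eq0 => /eqP z; split=> //.
by move: E; rewrite z subrr => /eqP; rewrite eq_sym subr_eq0 => /eqP.
Qed.

Lemma aB j u v : a j (u - v) = a j u - a j v. Proof. exact: linB. Qed.
Lemma bB j u v : b j (u - v) = b j u - b j v. Proof. exact: linB. Qed.
Lemma aN j u : a j (- u) = - a j u. Proof. exact: linN. Qed.
Lemma bN j u : b j (- u) = - b j u. Proof. exact: linN. Qed.
Lemma a0 j : a j 0 = 0. Proof. exact: lin0. Qed.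
Lemma b0 j : b j 0 = 0. Proof. exact: lin0. Qed.

Arguments uniq_dec {x0 x1 y0 y1}.

Lemma aa j w : a j (a j w) = 0.
Proof.
have := rel_xx M j j w; move=> /eqP; rewrite -mulr2n -scaler_nat.
rewrite scaler_eq0 (negbTE two_neq0) /= => /eqP //.
Qed.
Lemma bb j w : b j (b j w) = 0.
Proof.
have := rel_dxdx M j j w; move=> /eqP; rewrite -mulr2n -scaler_nat.
rewrite scaler_eq0 (negbTE two_neq0) /= => /eqP //.
Qed.
Lemma ba_ j w : b j (a j w) = w - a j (b j w).
Proof.
have e := rel_dxx M j j w; rewrite eqxx scale1r in e.
by rewrite -{2}e addrK.
Qed.
Lemma aba j w : a j (b j (a j w)) = a j w.
Proof. by rewrite ba_ aB aa subr0. Qed.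
Lemma bab j w : b j (a j (b j w)) = b j w.
Proof.
have : a j (b j w) = w - b j (a j w).
  have e := rel_dxx M j j w; rewrite eqxx scale1r in e.
  by rewrite -{2}e addrAC subrr add0r.
by move=> ->; rewrite bB bb subr0.
Qed.

Definition Q j w := a j (b j w) - b j (a j w).

Lemma lQ j : linear (Q j).
Proof.
move=> c u v; rewrite /Q !(linA (lb j)) !(linA (la j)) !(linA (lb j)) scalerBr.
by rewrite opprD addrACA.
Qed.
Hint Resolve lQ : core.
Lemma QB j u v : Q j (u - v) = Q j u - Q j v. Proof. exact: linB. Qed.
Lemma QN j u : Q j (- u) = - Q j u. Proof. exact: linN. Qed.
Lemma QD j u v : Q j (u + v) = Q j u + Q j v. Proof. exact: linD. Qed.
Lemma QZ j c u : Q j (c *: u) = c *: Q j u. Proof. exact: linZ. Qed.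
Lemma Q0 j : Q j 0 = 0. Proof. exact: lin0. Qed.

Lemma Qa j w : Q j (a j w) = - a j (Q j w).
Proof. by rewrite /Q aba aa b0 subr0 aB aa aba sub0r opprK. Qed.
Lemma Qb j w : Q j (b j w) = - b j (Q j w).
Proof. by rewrite /Q bb a0 bab bB bab bb sub0r subr0. Qed.
Lemma QQ j w : Q j (Q j w) = w.
Proof.
have h1 : b j (Q j w) = b j w by rewrite /Q bB bab bb subr0.
have h2 : a j (Q j w) = - a j w by rewrite /Q aB aa aba sub0r.
rewrite {1}/Q h1 h2 bN opprK.
by rewrite addrC rel_dxx eqxx scale1r.
Qed.

Lemma aanti j l w : a j (a l w) = - a l (a j w).
Proof. by apply/eqP; rewrite -addr_eq0 rel_xx. Qed.
Lemma banti j l w : b j (b l w) = - b l (b j w).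
Proof. by apply/eqP; rewrite -addr_eq0 rel_dxdx. Qed.
Lemma abanti j l w : j != l -> b j (a l w) = - a l (b j w).
Proof. by move=> ne; apply/eqP; rewrite -addr_eq0 rel_dxx (negbTE ne) scale0r. Qed.
Lemma babnti j l w : j != l -> a j (b l w) = - b l (a j w).
Proof.
move=> ne; apply/eqP; rewrite -addr_eq0 addrC rel_dxx [l == j]eq_sym (negbTE ne).
by rewrite scale0r.
Qed.

Lemma Qal j l w : j != l -> Q j (a l w) = a l (Q j w).
Proof.
move=> ne.
by rewrite /Q (abanti j l) // aN (aanti j l) opprK (aanti j l) bN (abanti j l) // opprK aB.
Qed.

Lemma Qbl j l w : j != l -> Q j (b l w) = b l (Q j w).
Proof.
move=> ne.
by rewrite /Q (banti j l) aN (babnti j l) // opprK (babnti j l) // bN (banti j l) opprK bB.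
Qed.

Lemma Qt j i w : Q j (opt M i w) = opt M i (Q j w).
Proof.
by rewrite /Q (linB (opt_lin M i)) !rel_tx !rel_tdx !rel_tx.
Qed.
Lemma Qdt j i w : Q j (opdt M i w) = opdt M i (Q j w).
Proof.
by rewrite /Q (linB (opdt_lin M i)) !rel_dtx !rel_dtdx !rel_dtx.
Qed.

Lemma QQc j l w : j != l -> Q j (Q l w) = Q l (Q j w).
Proof.
move=> ne; rewrite [Q l w]/Q QB (Qal j l) // (Qbl j l) // (Qbl j l) // (Qal j l) //.
Qed.

Lemma Qpar j w : (V0 w -> V0 (Q j w)) /\ (V1 w -> V1 (Q j w)).
Proof.
split=> h; apply: subB; rewrite ?[is_subspace _]/=; try exact: V0_sub; try exact: V1_sub.
- by apply: (opx_odd M j _).2; apply: (opdx_odd M j _).1.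
- by apply: (opdx_odd M j _).2; apply: (opx_odd M j _).1.
- by apply: (opx_odd M j _).1; apply: (opdx_odd M j _).2.
- by apply: (opdx_odd M j _).1; apply: (opx_odd M j _).2.
Qed.

Fixpoint Pl (s : seq 'I_n) w := if s is j :: s' then Q j (Pl s' w) else w.

Lemma lPl s : linear (Pl s).
Proof.
elim: s => [//|j s IH] c u v /=.
by rewrite IH (linA (lQ j)).
Qed.

Lemma Plpar s w : (V0 w -> V0 (Pl s w)) /\ (V1 w -> V1 (Pl s w)).
Proof.
elim: s => [//|j s [IH0 IH1]] /=; split=> h.
- by apply: (Qpar j _).1; apply: IH0.
- by apply: (Qpar j _).2; apply: IH1.
Qed.

Lemma Plt s i w : Pl s (opt M i w) = opt M i (Pl s w).
Proof. by elim: s => [//|j s IH] /=; rewrite IH Qt. Qed.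
Lemma Pldt s i w : Pl s (opdt M i w) = opdt M i (Pl s w).
Proof. by elim: s => [//|j s IH] /=; rewrite IH Qdt. Qed.

Lemma Pla s l w : Pl s (a l w) = (-1) ^+ (count_mem l s) *: a l (Pl s w).
Proof.
elim: s => [|j s IH] /=; first by rewrite expr0 scale1r.
rewrite IH QZ; case: (eqVneq j l) => [->|ne].
  by rewrite Qa add1n exprS -scalerA scaleN1r scalerN.
by rewrite Qal // (negbTE ne) add0n.
Qed.
Lemma Plb s l w : Pl s (b l w) = (-1) ^+ (count_mem l s) *: b l (Pl s w).
Proof.
elim: s => [|j s IH] /=; first by rewrite expr0 scale1r.
rewrite IH QZ; case: (eqVneq j l) => [->|ne].
  by rewrite Qb add1n exprS -scalerA scaleN1r scalerN.
by rewrite Qbl // (negbTE ne) add0n.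
Qed.

Lemma PlQ s j w : j \notin s -> Pl s (Q j w) = Q j (Pl s w).
Proof.
elim: s => [//|k s IH] /=; rewrite in_cons negb_or => /andP [ne ns].
by rewrite IH // QQc // eq_sym.
Qed.

Lemma PlPl s w : uniq s -> Pl s (Pl s w) = w.
Proof.
elim: s => [//|j s IH] /= /andP [ns us].
by rewrite PlQ // QQ IH.
Qed.

Lemma subPl (W : V -> Prop) s w : is_submodule M W -> W w -> W (Pl s w).
Proof.
move=> [HW [_ [_ [Ha Hb]]]]; elim: s => [//|j s IH] /= h.
by apply: subB => //; [apply: Ha; apply: Hb | apply: Hb; apply: Ha]; apply: IH.
Qed.

Definition P w := Pl (enum 'I_n) w.

Lemma lP : linear P. Proof. exact: lPl. Qed.
Lemma PP w : P (P w) = w. Proof. by apply: PlPl; exact: enum_uniq. Qed.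
Lemma Pa l w : P (a l w) = - a l (P w).
Proof.
by rewrite /P Pla count_uniq_mem ?enum_uniq // mem_enum expr1 scaleN1r.
Qed.
Lemma Pb l w : P (b l w) = - b l (P w).
Proof.
by rewrite /P Plb count_uniq_mem ?enum_uniq // mem_enum expr1 scaleN1r.
Qed.

Definition Wp v := forall v0 v1, V0 v0 -> V1 v1 -> v = v0 + v1 -> P v = v0 - v1.

Lemma Wp_even f : linear f -> (forall v, V0 v -> V0 (f v)) ->
  (forall v, V1 v -> V1 (f v)) -> (forall v, P (f v) = f (P v)) ->
  forall v, Wp v -> Wp (f v).
Proof.
move=> lf f0 f1 fP v Hv z0 z1 hz0 hz1 e.
have [v0 [v1 [h0 [h1 ev]]]] := V_sum M v.
have := Hv v0 v1 h0 h1 ev => Pv.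
have [<- <-] := uniq_dec (f0 _ h0) (f1 _ h1) hz0 hz1 (etrans (esym (linD lf)) (etrans (congr1 f (esym ev)) e)).
by rewrite fP Pv (linB lf).
Qed.

Lemma Wp_odd f : linear f -> (forall v, V0 v -> V1 (f v)) ->
  (forall v, V1 v -> V0 (f v)) -> (forall v, P (f v) = - f (P v)) ->
  forall v, Wp v -> Wp (f v).
Proof.
move=> lf f0 f1 fP v Hv z0 z1 hz0 hz1 e.
have [v0 [v1 [h0 [h1 ev]]]] := V_sum M v.
have := Hv v0 v1 h0 h1 ev => Pv.
have E : f v1 + f v0 = z0 + z1 by rewrite -e ev (linD lf) addrC.
have [<- <-] := uniq_dec (f1 _ h1) (f0 _ h0) hz0 hz1 E.
by rewrite fP Pv (linB lf) opprB.
Qed.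

Lemma Wp_sub : is_submodule M Wp.
Proof.
split; [split|split; [|split; [|split]]].
- move=> v0 v1 h0 h1 e.
  have z0 : V0 0 by case: (V0_sub M).
  have z1 : V1 0 by case: (V1_sub M).
  have [<- <-] := uniq_dec z0 z1 h0 h1 (etrans (addr0 _) e).
  by rewrite subr0 (lin0 lP).
- move=> c u v Hu Hv z0 z1 hz0 hz1 e.
  have [u0 [u1 [hu0 [hu1 eu]]]] := V_sum M u.
  have [v0 [v1 [hv0 [hv1 ev]]]] := V_sum M v.
  have Pu := Hu u0 u1 hu0 hu1 eu.
  have Pv := Hv v0 v1 hv0 hv1 ev.
  have E : (c *: u0 + v0) + (c *: u1 + v1) = z0 + z1.
    by rewrite -e eu ev scalerDr addrACA.
  have [<- <-] := uniq_dec (subD (V0_sub M) (subZ c (V0_sub M) hu0) hv0)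
     (subD (V1_sub M) (subZ c (V1_sub M) hu1) hv1) hz0 hz1 E.
  by rewrite (linA lP) Pu Pv scalerBr opprD addrACA.
- move=> i v; apply: Wp_even.
  + exact: opt_lin.
  + by move=> w h; apply: (opt_even M i w).1.
  + by move=> w h; apply: (opt_even M i w).2.
  + by move=> w; apply: Plt.
- move=> i v; apply: Wp_even.
  + exact: opdt_lin.
  + by move=> w h; apply: (opdt_even M i w).1.
  + by move=> w h; apply: (opdt_even M i w).2.
  + by move=> w; apply: Pldt.
- move=> j v; apply: Wp_odd.
  + exact: opx_lin.
  + by move=> w h; apply: (opx_odd M j w).1.
  + by move=> w h; apply: (opx_odd M j w).2.
  + by move=> w; apply: Pa.
- move=> j v; apply: Wp_odd.
  + exact: opdx_lin.
  + by move=> w h; apply: (opdx_odd M j w).1.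
  + by move=> w h; apply: (opdx_odd M j w).2.
  + by move=> w; apply: Pb.
Qed.

Lemma Wp_graded : is_graded M Wp.
Proof.
move=> v0 v1 h0 h1 H.
have := H v0 v1 h0 h1 erefl; rewrite (linD lP) => E.
have p0 : V0 (P v0) by apply: (Plpar _ _).1.
have p1 : V1 (P v1) by apply: (Plpar _ _).2.
have n1 : V1 (- v1) by apply: subN => //; exact: V1_sub.
have [e0 e1] := uniq_dec p0 p1 h0 n1 E.
have z0 : V0 0 by case: (V0_sub M).
have z1 : V1 0 by case: (V1_sub M).
split=> y0 y1 hy0 hy1 e.
- have [<- <-] := uniq_dec h0 z1 hy0 hy1 (etrans (addr0 _) e).
  by rewrite subr0.
- have [<- <-] := uniq_dec z0 h1 hy0 hy1 (etrans (add0r _) e).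
  by rewrite sub0r.
Qed.

End Main.
Arguments uniq_dec {m n V M x0 x1 y0 y1}.
Arguments P {m n V} M w.
Arguments lP {m n V} M.
Arguments PP {m n V} M w.
Arguments Plpar {m n V} M s w.
Arguments Wp_sub {m n V} M.
Arguments Wp_graded {m n V} M.

Theorem lemma3p3 (m n : nat) (Hmn : (0 < m + n)%N) (V : lmodType CC)
  (M : Kmodule m n V) :
  simple_Kmodule M -> strictly_simple_Kmodule M.
Proof.
move=> [_ Hs] W HW.
have WP : forall w, W w -> W (P M w) by move=> w; apply: subPl.
have key : forall v0 v1, V0 M v0 -> V1 M v1 -> W (v0 + v1) -> W (v0 - v1).
  move=> v0 v1 h0 h1 Hw.
  case: (Hs _ (Wp_sub M) (Wp_graded M)) => [Z|F].
  - have N0 : forall x, V0 M x -> P M x = - x.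
      move=> x hx.
      have hxP : V0 M (x + P M x).
        by apply: subD => //; [exact: V0_sub | apply: (Plpar _ _ _).1].
      have z1 : V1 M 0 by case: (V1_sub M).
      have : x + P M x = 0.
        apply: Z => y0 y1 hy0 hy1 e.
        have [<- <-] := uniq_dec hxP z1 hy0 hy1 (etrans (addr0 _) e).
        by rewrite subr0 (linD (lP M)) PP addrC.
      by move/eqP; rewrite addrC addr_eq0 => /eqP.
    have N1 : forall y, V1 M y -> P M y = y.
      move=> y hy.
      have hyP : V1 M (y - P M y).
        by apply: subB => //; [exact: V1_sub | apply: (Plpar _ _ _).2].
      have z0 : V0 M 0 by case: (V0_sub M).
      have : y - P M y = 0.
        apply: Z => y0 y1 hy0 hy1 e.
        have [<- <-] := uniq_dec z0 hyP hy0 hy1 (etrans (add0r _) e).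
        by rewrite sub0r (linB (lP M)) PP opprB.
      by move/subr0_eq.
    have -> : v0 - v1 = - P M (v0 + v1).
      by rewrite (linD (lP M)) N0 // N1 // opprD opprK.
    apply: subN; first by case: HW.
    exact: WP.
  - rewrite -(F (v0 + v1) v0 v1 h0 h1 erefl); exact: WP.
apply: Hs => // v0 v1 h0 h1 Hw.
have Hs' : is_subspace W by case: HW.
split.
- rewrite -(half_sum _ v0 v1); apply: subZ => //; apply: subD => //; exact: key.
- rewrite -(half_dif _ v0 v1); apply: subZ => //; apply: subB => //; exact: key.
Qed.
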